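(* Let a partial coloring of an $n\times n$ square with colors from $\{1,\dots,2n-2\}$ uniquely extend to $L(n,2n-2)$, and let $a,b,c$ be colors. Then there are no indices $k,l$ such that either (i) $(k+1,l+1)$, $(k+1,l+2)$, $(k+2,l+2)$, $(k+2,l+3)$ are all uncolored and $a(k+1,l+1)=\{a\}$, $a(k+1,l+2)=\{a,b\}$, $a(k+2,l+2)=\{b,c\}$; or (ii) $(k+3,l+2)$, $(k+2,l+2)$, $(k+2,l+1)$, $(k+1,l+1)$ are all uncolored and $a(k+3,l+2)=\{a\}$, $a(k+2,l+2)=\{a,b\}$, $a(k+2,l+1)=\{b,c\}$.
   Context: For positive integers $n,k$, let $\mathcal{L}_{n,k}$ be the set of $n\times n$ squares all of whose entries are colored with colors from a fixed set of $k$ colors $\{1,\dots,k\}$ such that any two entries in the same row, or in the same column, have different colors. Entries are indexed $(i,j)$, $i$ the row and $j$ the column. A partial coloring of an $n\times n$ square assigns colors from $\{1,\dots,k\}$ to some of its entries; the remaining entries are called uncolored. A partial coloring extends to $L(n,k)$ if the uncolored entries can be colored so that the resulting fully colored square lies in $\mathcal{L}_{n,k}$ (keeping the given colors), and it uniquely extends to $L(n,k)$ if there is exactly one such way. For an uncolored entry $(i,j)$ in a partial coloring with $k$ colors, $a(i,j)$ (the set of available colors) is the set of colors in $\{1,\dots,k\}$ that are not the color of any colored entry in row $i$ or column $j$. *)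

(* Defs.v *)
(* Rows, columns are 'I_n (0-based), colors are 'I_k
   (color c+1 of the paper is ordinal c). *)
From mathcomp Require Import all_boot.
Set Implicit Arguments. Unset Strict Implicit. Unset Printing Implicit Defensive.

(* A partial coloring: None = uncolored. *)
Definition pcoloring (n k : nat) := 'I_n -> 'I_n -> option 'I_k.
Definition coloring (n k : nat) := 'I_n -> 'I_n -> 'I_k.

Definition in_L (n k : nat) (L : coloring n k) : Prop :=
  (forall i j j', L i j = L i j' -> j = j') /\
  (forall i i' j, L i j = L i' j -> i = i').

Definition extends_to (n k : nat) (P : pcoloring n k) (L : coloring n k) : Prop :=
  forall i j c, P i j = Some c -> L i j = c.

Definition extends (n k : nat) (P : pcoloring n k) : Prop :=
  exists L : coloring n k, in_L L /\ extends_to P L.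

(* Exactly one extension (two colorings are the same iff they agree on all entries). *)
Definition uniquely_extends (n k : nat) (P : pcoloring n k) : Prop :=
  exists L : coloring n k, (in_L L /\ extends_to P L) /\
    forall L' : coloring n k, in_L L' -> extends_to P L' -> forall i j, L' i j = L i j.

Definition avail (n k : nat) (P : pcoloring n k) (i j : 'I_n) : {set 'I_k} :=
  [set c | [forall j' : 'I_n, P i j' != Some c] && [forall i' : 'I_n, P i' j != Some c]].

(* Main.v *)
Require Import Defs.
From mathcomp Require Import all_boot.
From mathcomp Require Import zify.

Set Implicit Arguments. Unset Strict Implicit. Unset Printing Implicit Defensive.

Section Gen.
Variables (n k : nat).

Definition rowc (P : pcoloring n k) i : {set 'I_k} := [set c | [exists j, P i j == Some c]].
Definition colc (P : pcoloring n k) j : {set 'I_k} := [set c | [exists i, P i j == Some c]].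

Lemma avail_eq P i j : avail P i j = ~: (rowc P i :|: colc P j).
Proof.
apply/setP => x; rewrite !inE negb_or !negb_exists.
by apply/andP/andP => [[/forallP H1 /forallP H2]|[/forallP H1 /forallP H2]];
  split; apply/forallP => y; rewrite ?negbK; [exact: H1|exact: H2|exact: H1|exact: H2].
Qed.

Lemma rowc_card (P : pcoloring n k) i (D : {set 'I_n}) (d : 'I_k) :
  (forall j, j \in D -> P i j = None) -> #|rowc P i| + #|D| <= n.
Proof.
move=> HD.
have sub : rowc P i \subset (fun j => odflt d (P i j)) @: ~: D.
  apply/subsetP => x; rewrite inE => /existsP [j /eqP Hj].
  apply/imsetP; exists j; last by rewrite Hj.
  rewrite inE; apply/negP => /HD; by rewrite Hj.
have E := cardsC D; rewrite card_ord in E.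
apply: (@leq_trans (#|D| + #|~: D|)); last by rewrite E.
rewrite addnC leq_add2l.
exact: leq_trans (subset_leq_card sub) (leq_imset_card _ _).
Qed.

Lemma colc_card (P : pcoloring n k) j (D : {set 'I_n}) (d : 'I_k) :
  (forall i, i \in D -> P i j = None) -> #|colc P j| + #|D| <= n.
Proof.
move=> HD.
have sub : colc P j \subset (fun i => odflt d (P i j)) @: ~: D.
  apply/subsetP => x; rewrite inE => /existsP [i /eqP Hj].
  apply/imsetP; exists i; last by rewrite Hj.
  rewrite inE; apply/negP => /HD; by rewrite Hj.
have E := cardsC D; rewrite card_ord in E.
apply: (@leq_trans (#|D| + #|~: D|)); last by rewrite E.
rewrite addnC leq_add2l.
exact: leq_trans (subset_leq_card sub) (leq_imset_card _ _).
Qed.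

Lemma gen (P : pcoloring n k) (a b c : 'I_k) (r1 r2 c1 c2 c3 : 'I_n) :
  k = 2 * n - 2 ->
  r1 != r2 -> c1 != c2 -> c2 != c3 -> c1 != c3 ->
  P r1 c1 = None -> P r1 c2 = None -> P r2 c2 = None -> P r2 c3 = None ->
  avail P r1 c1 = [set a] -> avail P r1 c2 = [set a; b] ->
  avail P r2 c2 = [set b; c] -> False.
Proof.
move=> Hk n12 m12 m23 m13 N1 N2 N3 N4.
rewrite !avail_eq => H1 H2 H3.
set R1 := rowc P r1 in H1 H2; set R2 := rowc P r2 in H3.
set C1 := colc P c1 in H1; set C2 := colc P c2 in H2 H3.
have cR1 : #|R1| + 2 <= n.
  have h : #|R1| + #|[set c1; c2]| <= n.
    apply: (rowc_card a) => j; rewrite !inE => /orP[]/eqP->//.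
  by rewrite cards2 m12 in h.
have cC1 : #|C1| + 1 <= n.
  have h : #|C1| + #|[set r1]| <= n.
    apply: (colc_card a) => i; rewrite !inE => /eqP->//.
  by rewrite cards1 in h.
have cC2 : #|C2| + 2 <= n.
  have h : #|C2| + #|[set r1; r2]| <= n.
    apply: (colc_card a) => i; rewrite !inE => /orP[]/eqP->//.
  by rewrite cards2 n12 in h.
have cR2 : #|R2| + 2 <= n.
  have h : #|R2| + #|[set c2; c3]| <= n.
    apply: (rowc_card a) => j; rewrite !inE => /orP[]/eqP->//.
  by rewrite cards2 m23 in h.
have K1 := cardsC (R1 :|: C1); rewrite H1 cards1 card_ord in K1.
have K2 := cardsC (R2 :|: C2); rewrite H3 card_ord in K2.
have Kbc : #|[set b; c]| <= 2 by rewrite cards2; case: (b != c).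
rewrite cards2 in K2.
have Kbc' : (b != c).+1 <= 2 by case: (b != c).
have U1 := cardsUI R1 C1.
have U2 := cardsUI R2 C2.
have I1 : R1 :&: C1 = set0 by apply/eqP; rewrite -cards_eq0; lia.
have I2 : R2 :&: C2 = set0 by apply/eqP; rewrite -cards_eq0; lia.
case E: (P r2 c1) => [x|].
- have xR2 : x \in R2 by rewrite inE; apply/existsP; exists c1; rewrite E.
  have xC1 : x \in C1 by rewrite inE; apply/existsP; exists r2; rewrite E.
  have xC2 : x \notin C2.
    apply/negP => xC2; have h : x \in R2 :&: C2 by rewrite inE xR2.
    by rewrite I2 inE in h.
  have xR1 : x \notin R1.
    apply/negP => xR1; have h : x \in R1 :&: C1 by rewrite inE xR1.
    by rewrite I1 inE in h.
  have xa : x != a.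
    apply/eqP => xa; have : a \in [set a] by rewrite inE.
    by rewrite -H1 in_setC in_setU -xa xC1 orbT.
  have : x \in ~: (R1 :|: C2) by rewrite in_setC in_setU negb_or xR1.
  rewrite H2 !inE (negbTE xa) /= => /eqP xb.
  have : b \in ~: (R2 :|: C2) by rewrite H3 !inE eqxx.
  by rewrite in_setC in_setU -xb xR2.
- have cR2' : #|R2| + #|[set c1; c2; c3]| <= n.
    apply: (rowc_card a) => j; rewrite !inE => /orP[/orP[]|]/eqP->//.
  have : #|[set c1; c2; c3]| = 3.
    rewrite -setUA cardsU1 cards2 m23 !inE negb_or m12 m13 //.
  lia.
Qed.

End Gen.

(* 0-based indices: paper rows k+1,k+2,k+3 are i1,i2,i3; columns l+1,l+2,l+3 are j1,j2,j3. *)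
Theorem lemma3 (n : nat) (P : pcoloring n (2 * n - 2)) (a b c : 'I_(2 * n - 2)) :
  uniquely_extends P ->
  (forall i1 i2 j1 j2 j3 : 'I_n,
      val i2 = (val i1).+1 -> val j2 = (val j1).+1 -> val j3 = (val j1).+2 ->
      ~ (P i1 j1 = None /\ P i1 j2 = None /\ P i2 j2 = None /\ P i2 j3 = None /\
            avail P i1 j1 = [set a] /\ avail P i1 j2 = [set a; b] /\
          avail P i2 j2 = [set b; c])) /\
  (forall i1 i2 i3 j1 j2 : 'I_n,
      val i2 = (val i1).+1 -> val i3 = (val i1).+2 -> val j2 = (val j1).+1 ->
      ~ (P i3 j2 = None /\ P i2 j2 = None /\ P i2 j1 = None /\ P i1 j1 = None /\
            avail P i3 j2 = [set a] /\ avail P i2 j2 = [set a; b] /\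
          avail P i2 j1 = [set b; c])).
Proof.
move=> _; split.
- move=> i1 i2 j1 j2 j3 e2 f2 f3 [N1 [N2 [N3 [N4 [H1 [H2 H3]]]]]].
  apply: (gen (a:=a) (b:=b) (c:=c) (r1:=i1) (r2:=i2) (c1:=j1) (c2:=j2) (c3:=j3))
    N1 N2 N3 N4 H1 H2 H3 => //; apply/negP => /eqP E; subst; lia.
- move=> i1 i2 i3 j1 j2 e2 e3 f2 [N1 [N2 [N3 [N4 [H1 [H2 H3]]]]]].
  pose PT : pcoloring n (2 * n - 2) := fun i j => P j i.
  have AT : forall i j, avail PT i j = avail P j i.
    by move=> i j; apply/setP => x; rewrite !inE andbC.
  apply: (gen (P:=PT) (a:=a) (b:=b) (c:=c) (r1:=j2) (r2:=j1) (c1:=i3) (c2:=i2) (c3:=i1))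
    => //; rewrite ?AT //; apply/negP => /eqP E; subst; lia.
Qed.
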